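(* Let $V_0$ be a nonlocal vertex algebra such that every $V_0$-module is completely reducible. Regard $V=V_0[[\hbar]]$ as an $\hbar$-adic nonlocal vertex algebra. Then every $V$-module is completely reducible, i.e. for every $V$-module $W$ and every submodule $W'\subseteq W$ there is a submodule $W''\subseteq W$ with $W=W'\oplus W''$.
   Context: Let $\hbar$ be a formal variable. A $\mathbb{C}[[\hbar]]$-module is topologically free if it is of the form $W_0[[\hbar]]$ for a complex vector space $W_0$. An ordinary nonlocal vertex algebra $V_0$ makes $V_0[[\hbar]]$ an $\hbar$-adic nonlocal vertex algebra by $\mathbb{C}[[\hbar]]$-linear extension. A module over an $\hbar$-adic nonlocal vertex algebra is by definition topologically free. For a $\mathbb{C}[[\hbar]]$-submodule $U$ of a topologically free module $W$, set $[U]=\{w\in W:\hbar^n w\in U\text{ for some }n\ge 1\}$ and let $\overline{U}$ be its $\hbar$-adic closure. Convention: a submodule of a module $W$ over an $\hbar$-adic nonlocal vertex algebra $V$ is a $\mathbb{C}[[\hbar]]$-submodule $W_1$ stable under all operators $u_n$ ($u\in V$) such that $\overline{W_1}=W_1$ and $[W_1]=W_1$. A $V_0$-module is completely reducible if every submodule has a complementary submodule. *)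

(* Defs.v *)
From HB Require Import structures.
From mathcomp Require Import all_boot all_order all_algebra.
From mathcomp Require Import all_classical reals.
From mathcomp Require Import complex.

Set Implicit Arguments.
Unset Strict Implicit.
Unset Printing Implicit Defensive.

Import Order.TTheory GRing.Theory Num.Theory.
Local Open Scope ring_scope.
Local Open Scope classical_set_scope.

(* Conventions: a vertex operator Y(u,x) = \sum_{n in Z} u_n x^{-n-1} is encoded
   by its modes  Y u n = u_n.  All formal-series identities are written out
   coefficientwise. *)

Section Defs.
Variable K : fieldType.

Definition binz (z : int) (i : nat) : int :=
  match z with
  | Posz n => ('C(n, i))%:Z
  | Negz n => (-1) ^+ i * ('C(n + i, i))%:Z
  end.

(* finitely supported sum over nat (the terms will always be finitely supported) *)
Definition fsum (M : zmodType) (f : nat -> M) : M := \sum_(i \in [set: nat]) f i.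

Definition bilinear_modes (V W : lmodType K) (Y : V -> int -> W -> W) : Prop :=
  (forall (a : K) u u' n w, Y (a *: u + u') n w = a *: Y u n w + Y u' n w) /\
  (forall (a : K) u n w w', Y u n (a *: w + w') = a *: Y u n w + Y u n w').

(* Y(u,x)w in W((x)) *)
Definition truncated (V W : lmodType K) (Y : V -> int -> W -> W) : Prop :=
  forall u w, exists N : int, forall n : int, N <= n -> Y u n w = 0.

(* coefficient of x0^a x2^b in (x0+x2)^l Y_W(u,x0+x2) Y_W(v,x2) w *)
Definition wa_lhs (V W : lmodType K) (YW : V -> int -> W -> W)
  (l : nat) (u v : V) (w : W) (a b : int) : W :=
  fsum (fun i : nat => YW u (Posz l - 1 - a - Posz i) (YW v (Posz i - b - 1) w)
                         *~ binz (a + Posz i) i).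

(* coefficient of x0^a x2^b in (x0+x2)^l Y_W(Y(u,x0)v,x2) w *)
Definition wa_rhs (V W : lmodType K) (YV : V -> int -> V -> V)
  (YW : V -> int -> W -> W) (l : nat) (u v : V) (w : W) (a b : int) : W :=
  \sum_(j < l.+1) YW (YV u (Posz l - Posz j - a - 1) v) (Posz j - b - 1) w *+ 'C(l, j).

Definition weak_assoc (V W : lmodType K) (YV : V -> int -> V -> V)
  (YW : V -> int -> W -> W) : Prop :=
  forall u v w, exists l : nat, forall a b : int,
    wa_lhs YW l u v w a b = wa_rhs YV YW l u v w a b.

Definition is_nlva (V : lmodType K) (vac : V) (Y : V -> int -> V -> V) : Prop :=
  [/\ bilinear_modes Y, truncated Y,
      (forall n v, Y vac n v = if n == -1 then v else 0),
      ((forall v (n : int), 0 <= n -> Y v n vac = 0) /\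
       (forall v, Y v (-1) vac = v)) & weak_assoc Y Y].

Definition is_module (V : lmodType K) (vac : V) (YV : V -> int -> V -> V)
  (W : lmodType K) (YW : V -> int -> W -> W) : Prop :=
  [/\ bilinear_modes YW, truncated YW,
      (forall n w, YW vac n w = if n == -1 then w else 0) & weak_assoc YV YW].

Definition submodule (V W : lmodType K) (YW : V -> int -> W -> W) (W1 : W -> Prop) : Prop :=
  [/\ W1 0, (forall w w', W1 w -> W1 w' -> W1 (w + w')),
      (forall (a : K) w, W1 w -> W1 (a *: w)) &
      (forall u n w, W1 w -> W1 (YW u n w))].

Definition direct_sum_decomp (W : zmodType) (W1 W2 : W -> Prop) : Prop :=
  (forall w, exists w1 w2, [/\ W1 w1, W2 w2 & w = w1 + w2]) /\
  (forall w, W1 w -> W2 w -> w = 0).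

Definition completely_reducible (V W : lmodType K) (YW : V -> int -> W -> W) : Prop :=
  forall W1 : W -> Prop, submodule YW W1 ->
    exists W2 : W -> Prop, submodule YW W2 /\ direct_sum_decomp W1 W2.

(* A topologically free C[[h]]-module W0[[h]] is modelled by coefficient
   sequences  nat -> W0  (w = \sum_k w k h^k); C[[h]] is  nat -> K. *)

Definition szero (M : zmodType) : nat -> M := fun _ => 0.
Definition sadd (M : zmodType) (f g : nat -> M) : nat -> M := fun k => f k + g k.
Definition hmul (M : lmodType K) (c : nat -> K) (w : nat -> M) : nat -> M :=
  fun k => \sum_(i < k.+1) c i *: w (k - i)%N.
Definition hpow (M : zmodType) (n : nat) (w : nat -> M) : nat -> M :=
  fun k => if (n <= k)%N then w (k - n)%N else 0.
Definition cong_mod (M : zmodType) (n : nat) (w w' : nat -> M) : Prop :=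
  forall k, (k < n)%N -> w k = w' k.
(* hbar-adically convergent sum of a family, computed coefficientwise *)
Definition ssum (M : zmodType) (f : nat -> nat -> M) : nat -> M :=
  fun k => fsum (fun i => f i k).

(* V = V0[[h]] with the C[[h]]-bilinear extension of Y and vacuum 1 *)
Definition Yext (V0 : lmodType K) (Y : V0 -> int -> V0 -> V0)
  (u : nat -> V0) (n : int) (v : nat -> V0) : nat -> V0 :=
  fun k => \sum_(i < k.+1) Y (u i) n (v (k - i)%N).
Definition vacext (V0 : zmodType) (vac : V0) : nat -> V0 :=
  fun k => if k == 0%N then vac else 0.

Definition hlinear_modes (V0 W0 : lmodType K)
  (YW : (nat -> V0) -> int -> (nat -> W0) -> (nat -> W0)) : Prop :=
  (forall c u u' n w, YW (sadd (hmul c u) u') n w = sadd (hmul c (YW u n w)) (YW u' n w)) /\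
  (forall c u n w w', YW u n (sadd (hmul c w) w') = sadd (hmul c (YW u n w)) (YW u n w')).

(* Y_W(u,x)w in W_h((x)) : modes tend to 0 hbar-adically *)
Definition htruncated (V0 W0 : lmodType K)
  (YW : (nat -> V0) -> int -> (nat -> W0) -> (nat -> W0)) : Prop :=
  forall u w (m : nat), exists N : int, forall n : int, N <= n ->
    cong_mod m (YW u n w) (@szero W0).

Definition hwa_lhs (V0 W0 : lmodType K)
  (YW : (nat -> V0) -> int -> (nat -> W0) -> (nat -> W0))
  (l : nat) u v w (a b : int) : nat -> W0 :=
  ssum (fun (i : nat) k =>
          (YW u (Posz l - 1 - a - Posz i) (YW v (Posz i - b - 1) w) k) *~ binz (a + Posz i) i).

Definition hwa_rhs (V0 W0 : lmodType K) (Y : V0 -> int -> V0 -> V0)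
  (YW : (nat -> V0) -> int -> (nat -> W0) -> (nat -> W0))
  (l : nat) u v w (a b : int) : nat -> W0 :=
  fun k => \sum_(j < l.+1)
     (YW (Yext Y u (Posz l - Posz j - a - 1) v) (Posz j - b - 1) w k) *+ 'C(l, j).

Definition is_hmodule (V0 : lmodType K) (vac : V0) (Y : V0 -> int -> V0 -> V0)
  (W0 : lmodType K) (YW : (nat -> V0) -> int -> (nat -> W0) -> (nat -> W0)) : Prop :=
  [/\ hlinear_modes YW, htruncated YW,
      (forall n w, YW (vacext vac) n w = if n == -1 then w else @szero W0) &
      (forall u v w (m : nat), exists l : nat, forall a b : int,
          cong_mod m (hwa_lhs YW l u v w a b) (hwa_rhs Y YW l u v w a b))].

Definition hsat (M : zmodType) (U : (nat -> M) -> Prop) (w : nat -> M) : Prop :=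
  exists n : nat, (1 <= n)%N /\ U (hpow n w).
Definition hclosure (M : zmodType) (U : (nat -> M) -> Prop) (w : nat -> M) : Prop :=
  forall m : nat, exists w', U w' /\ cong_mod m w w'.

Definition hsubmodule (V0 W0 : lmodType K)
  (YW : (nat -> V0) -> int -> (nat -> W0) -> (nat -> W0))
  (W1 : (nat -> W0) -> Prop) : Prop :=
  [/\ W1 (@szero W0), (forall w w', W1 w -> W1 w' -> W1 (sadd w w')),
      (forall c w, W1 w -> W1 (hmul c w)),
      (forall u n w, W1 w -> W1 (YW u n w)) &
      ((forall w, hclosure W1 w <-> W1 w) /\
       (forall w, hsat W1 w <-> W1 w))].

Definition hdirect_sum_decomp (W0 : zmodType) (W1 W2 : (nat -> W0) -> Prop) : Prop :=
  (forall w, exists w1 w2, [/\ W1 w1, W2 w2 & w = sadd w1 w2]) /\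
  (forall w, W1 w -> W2 w -> w = @szero W0).

Definition hcompletely_reducible (V0 W0 : lmodType K)
  (YW : (nat -> V0) -> int -> (nat -> W0) -> (nat -> W0)) : Prop :=
  forall W1, hsubmodule YW W1 ->
    exists W2, hsubmodule YW W2 /\ hdirect_sum_decomp W1 W2.

End Defs.

(* Main.v *)
Require Import Defs.
From HB Require Import structures.
From mathcomp Require Import all_boot all_order all_algebra.
From mathcomp Require Import all_classical reals.
From mathcomp Require Import complex.
From mathcomp Require Import zify.
Set Implicit Arguments.
Unset Strict Implicit.
Unset Printing Implicit Defensive.
Import Order.TTheory GRing.Theory Num.Theory.
Local Open Scope ring_scope.


Section Seq.
Variable K : fieldType.

Definition hsum (M : zmodType) (F : nat -> nat -> M) : nat -> M :=
  fun j => \sum_(k < j.+1) F k (j - k)%N.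

Lemma hsum0 (M : zmodType) (F : nat -> nat -> M) : hsum F 0 = F 0%N 0%N.
Proof. by rewrite /hsum big_ord1. Qed.

Lemma hsumS (M : zmodType) (F : nat -> nat -> M) j :
  hsum F j.+1 = hsum (fun k => F k.+1) j + F 0%N j.+1.
Proof. by rewrite /hsum big_ord_recl /= subn0 addrC. Qed.

Definition d1 : nat -> K := fun k => if k == 1%N then 1 else 0.

Lemma hmul_d1 (M : lmodType K) (x : nat -> M) j :
  hmul d1 x j = if j is j'.+1 then x j' else 0.
Proof.
rewrite /hmul; case: j => [|j]; first by rewrite big_ord1 /d1 /= scale0r.
rewrite big_ord_recl /d1 /= scale0r add0r big_ord_recl /= scale1r subSS subn0.
by rewrite big1 ?addr0 // => i _; rewrite /= scale0r.
Qed.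

Lemma hmul_vac (M : lmodType K) (a : K) (x : nat -> M) j :
  hmul (vacext a) x j = a *: x j.
Proof.
rewrite /hmul big_ord_recl /vacext /= subn0 big1 ?addr0 // => i _.
by rewrite /= scale0r.
Qed.

Lemma hsum_split (M : lmodType K) (F : nat -> nat -> M) :
  hsum F = sadd (hmul d1 (hsum (fun k => F k.+1))) (F 0%N).
Proof.
apply: funext => j; rewrite /sadd hmul_d1; case: j => [|j].
  by rewrite hsum0 add0r.
by rewrite hsumS.
Qed.

Lemma hsum_vac (M : zmodType) (w : nat -> M) : hsum (fun k => vacext (w k)) = w.
Proof.
apply: funext => j; elim: j w => [|j IH] w; first by rewrite hsum0.
by rewrite hsumS IH /vacext /= addr0.
Qed.

Lemma seq_split (M : lmodType K) (w : nat -> M) :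
  w = sadd (hmul d1 (fun k => w k.+1)) (vacext (w 0%N)).
Proof.
apply: funext => j; rewrite /sadd hmul_d1 /vacext; case: j => [|j] /=.
  by rewrite add0r. by rewrite addr0.
Qed.

End Seq.


Section Expand.
Variable K : fieldType.
Variables V0 W0 : lmodType K.
Variable YW : (nat -> V0) -> int -> (nat -> W0) -> (nat -> W0).
Hypothesis HL : hlinear_modes YW.

Lemma YW_hsumr u n (F : nat -> nat -> W0) :
  YW u n (hsum F) = hsum (fun k => YW u n (F k)).
Proof.
apply: funext => j; elim: j F => [|j IH] F.
  rewrite hsum_split HL.2 /sadd hmul_d1 add0r.
  by rewrite hsum0.
rewrite hsum_split HL.2 /sadd hmul_d1 IH hsumS; done.
Qed.

Lemma YW_hsuml (U : nat -> nat -> V0) n w :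
  YW (hsum U) n w = hsum (fun k => YW (U k) n w).
Proof.
apply: funext => j; elim: j U => [|j IH] U.
  rewrite hsum_split HL.1 /sadd hmul_d1 add0r.
  by rewrite hsum0.
rewrite hsum_split HL.1 /sadd hmul_d1 IH hsumS; done.
Qed.

Lemma YW_expr u n w :
  YW u n w = hsum (fun k => YW u n (vacext (w k))).
Proof. by rewrite -{1}(hsum_vac w) YW_hsumr. Qed.

Lemma YW_expl u n w :
  YW u n w = hsum (fun k => YW (vacext (u k)) n w).
Proof. by rewrite -{1}(hsum_vac u) YW_hsuml. Qed.

Lemma YW_congr m u n w w' : cong_mod m w w' -> cong_mod m (YW u n w) (YW u n w').
Proof.
move=> H j jm; rewrite (YW_expr u n w) (YW_expr u n w') /hsum.
apply: eq_bigr => k _; rewrite H //; exact: leq_ltn_trans (leq_ord k) jm.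
Qed.

Lemma YW_congl m u u' n w : cong_mod m u u' -> cong_mod m (YW u n w) (YW u' n w).
Proof.
move=> H j jm; rewrite (YW_expl u n w) (YW_expl u' n w) /hsum.
apply: eq_bigr => k _; rewrite H //; exact: leq_ltn_trans (leq_ord k) jm.
Qed.

Lemma YW_0r u n : YW u n (@szero W0) = @szero W0.
Proof.
have E : @szero W0 = sadd (hmul (vacext (-1)) (@szero W0)) (@szero W0).
  by apply: funext => j; rewrite /sadd hmul_vac /szero scaler0 addr0.
have := HL.2 (vacext (-1)) u n (@szero W0) (@szero W0); rewrite -E => H.
apply: funext => j; have := congr1 (fun f => f j) H.
rewrite /sadd hmul_vac scaleN1r addNr; done.
Qed.

Lemma YW_0l n w : YW (@szero V0) n w = @szero W0.
Proof.
have E : @szero V0 = sadd (hmul (vacext (-1)) (@szero V0)) (@szero V0).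
  by apply: funext => j; rewrite /sadd hmul_vac /szero scaler0 addr0.
have := HL.1 (vacext (-1)) (@szero V0) (@szero V0) n w; rewrite -E => H.
apply: funext => j; have := congr1 (fun f => f j) H.
rewrite /sadd hmul_vac scaleN1r addNr; done.
Qed.

Lemma YW_addr u n w w' : YW u n (sadd w w') = sadd (YW u n w) (YW u n w').
Proof.
have E : sadd w w' = sadd (hmul (vacext 1) w) w'.
  by apply: funext => j; rewrite /sadd hmul_vac scale1r.
rewrite E HL.2; apply: funext => j; by rewrite /sadd hmul_vac scale1r.
Qed.

Lemma YW_addl u u' n w : YW (sadd u u') n w = sadd (YW u n w) (YW u' n w).
Proof.
have E : sadd u u' = sadd (hmul (vacext 1) u) u'.
  by apply: funext => j; rewrite /sadd hmul_vac scale1r.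
rewrite E HL.1; apply: funext => j; by rewrite /sadd hmul_vac scale1r.
Qed.

Lemma YW_scalel (a : K) u n w : YW (fun k => a *: u k) n w = fun k => a *: YW u n w k.
Proof.
have E : (fun k => a *: u k) = sadd (hmul (vacext a) u) (@szero V0).
  by apply: funext => j; rewrite /sadd hmul_vac /szero addr0.
rewrite E HL.1 YW_0l; apply: funext => j; by rewrite /sadd hmul_vac /szero addr0.
Qed.

Lemma YW_scaler (a : K) u n w : YW u n (fun k => a *: w k) = fun k => a *: YW u n w k.
Proof.
have E : (fun k => a *: w k) = sadd (hmul (vacext a) w) (@szero W0).
  by apply: funext => j; rewrite /sadd hmul_vac /szero addr0.
rewrite E HL.2 YW_0r; apply: funext => j; by rewrite /sadd hmul_vac /szero addr0.
Qed.

End Expand.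


Lemma fsum_trunc (M : zmodType) (f : nat -> M) N :
  (forall i, (N <= i)%N -> f i = 0) -> fsum f = \sum_(i < N) f i.
Proof.
move=> H; rewrite /fsum (fsbigE (iota 0 N)) ?iota_uniq //.
- rewrite -(big_mkord xpredT) /index_iota subn0; apply: eq_bigl => i.
  exact/mem_set.
- by move=> i _; rewrite mem_iota add0n leq0n /= -leqNgt => /H.
Qed.

Section Trunc.
Variable K : fieldType.
Variable W0 : lmodType K.

Definition extn n (x : {ffun 'I_n -> W0}) : nat -> W0 :=
  fun j => if (j < n)%N =P true is ReflectT h then x (Ordinal h) else 0.
Definition res n (y : nat -> W0) : {ffun 'I_n -> W0} := [ffun i => y (val i)].

Lemma extnE n x (i : 'I_n) : extn x (val i) = x i.
Proof.
rewrite /extn; case: eqP => [h|]; last by rewrite ltn_ord.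
by congr (x _); apply: val_inj.
Qed.

Lemma extnE' n x j (jn : (j < n)%N) : extn x j = x (Ordinal jn).
Proof. exact: (extnE x (Ordinal jn)). Qed.

Lemma extn_out n x j : (n <= j)%N -> extn (n:=n) x j = 0.
Proof. by rewrite /extn; case: eqP => // h; rewrite leqNgt h. Qed.

Lemma res_ext n x : res n (extn x) = x.
Proof. by apply/ffunP => i; rewrite ffunE extnE. Qed.

Lemma extn_res n y : cong_mod n (extn (res n y)) y.
Proof. by move=> j jn; rewrite (extnE' _ jn) ffunE. Qed.

Lemma res_cong n y y' : cong_mod n y y' -> res n y = res n y'.
Proof. by move=> H; apply/ffunP => i; rewrite !ffunE (H _ (ltn_ord i)). Qed.

Lemma res_congE n y y' : res n y = res n y' -> cong_mod n y y'.
Proof. by move=> H j jn; have := congr1 (fun f : {ffun 'I_n -> W0} => f (Ordinal jn)) H; rewrite !ffunE. Qed.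

Lemma extn_add n x x' : extn (n:=n) (x + x') = sadd (extn x) (extn x').
Proof.
apply: funext => j; rewrite /sadd; case: (ltnP j n) => jn.
  by rewrite !(extnE' _ jn) ffunE.
by rewrite !extn_out // addr0.
Qed.

Lemma extn_scale n a x : extn (n:=n) (a *: x) = fun j => a *: extn x j.
Proof.
apply: funext => j; case: (ltnP j n) => jn.
  by rewrite !(extnE' _ jn) ffunE.
by rewrite !extn_out // scaler0.
Qed.

Lemma extn0 n : extn (n:=n) 0 = @szero W0.
Proof.
apply: funext => j; case: (ltnP j n) => jn.
  by rewrite !(extnE' _ jn) ffunE.
by rewrite !extn_out.
Qed.

End Trunc.

Section Wn.
Variable K : fieldType.
Variables V0 W0 : lmodType K.
Variable vac : V0.
Variable Y : V0 -> int -> V0 -> V0.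
Variable YW : (nat -> V0) -> int -> (nat -> W0) -> (nat -> W0).
Hypothesis HY : is_nlva vac Y.
Hypothesis HM : is_hmodule vac Y YW.

Lemma HL : hlinear_modes YW. Proof. by case: HM. Qed.

Lemma Y0l p w : Y 0 p w = 0.
Proof.
case: HY => [[H1 _] _ _ _ _]; have := H1 1 0 0 p w.
rewrite !scale1r addr0 => H.
by apply: (addrI (Y 0 p w)); rewrite addr0 -H.
Qed.

Lemma Y0r u p : Y u p 0 = 0.
Proof.
case: HY => [[_ H1] _ _ _ _]; have := H1 1 u p 0 0.
rewrite !scale1r addr0 => H.
by apply: (addrI (Y u p 0)); rewrite addr0 -H.
Qed.

Lemma Yext_vac u p v : Yext Y (vacext u) p (vacext v) = vacext (Y u p v).
Proof.
apply: funext => k; rewrite /Yext; case: k => [|k].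
  by rewrite big_ord1.
rewrite big_ord_recl /vacext /= Y0r add0r big1 // => i _ /=; exact: Y0l.
Qed.

Definition YWn n (v : V0) (p : int) (x : {ffun 'I_n -> W0}) : {ffun 'I_n -> W0} :=
  res n (YW (vacext v) p (extn x)).

Lemma YWn_E n v p x (i : 'I_n) : YWn v p x i = YW (vacext v) p (extn x) (val i).
Proof. by rewrite ffunE. Qed.

Lemma YWn_module n : is_module vac Y (@YWn n).
Proof.
case: HM => HL' Htr Hvac Hwa.
split.
- split.
  + move=> a u u' p w; apply/ffunP => i; rewrite !ffunE.
    have -> : vacext (a *: u + u') = sadd (hmul (vacext a) (vacext u)) (vacext u').
      apply: funext => j; rewrite /sadd hmul_vac /vacext; case: (j == 0%N).
        by []. by rewrite scaler0 addr0.
    by rewrite HL'.1 /sadd hmul_vac.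
  + move=> a u p w w'; apply/ffunP => i; rewrite !ffunE.
    rewrite extn_add extn_scale.
    have -> : (fun j => a *: extn w j) = hmul (vacext a) (extn w).
      by apply: funext => j; rewrite hmul_vac.
    by rewrite HL'.2 /sadd hmul_vac.
- move=> u w; have [N HN] := Htr (vacext u) (extn w) n; exists N => p Np.
  by apply/ffunP => i; rewrite !ffunE (HN p Np i (ltn_ord i)).
- move=> p w; apply/ffunP => i; rewrite !ffunE Hvac.
  case: (p == -1); [apply: extnE | by rewrite ffunE].
- move=> u v w.
  have [l Hl] := Hwa (vacext u) (vacext v) (extn w) n.
  have [N HN] := Htr (vacext v) (extn w) n.
  exists l => a b.
  pose N' := absz (N + b + 1).
  have Hz : forall i : nat, (N' <= i)%N -> N <= Posz i - b - 1.
    move=> i Hi; rewrite /N' in Hi; lia.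
  rewrite /wa_lhs /wa_rhs (fsum_trunc (N := N')); last first.
    move=> i Hi; apply/ffunP => k; rewrite ffunMzE !ffunE.
    have HC : cong_mod n (extn (YWn v (Posz i - b - 1) w)) (@szero W0).
      move=> j jn; rewrite (extnE' _ jn) ffunE; exact: (HN _ (Hz _ Hi)).
    by rewrite (YW_congr HL' _ _ HC) ?ltn_ord // YW_0r // mul0rz.
  apply/ffunP => k; rewrite !sum_ffunE.
  have := Hl a b k (ltn_ord k).
  rewrite /hwa_lhs /hwa_rhs /ssum (fsum_trunc (N := N')); last first.
    move=> i Hi.
    have HC : cong_mod n (YW (vacext v) (Posz i - b - 1) (extn w)) (@szero W0).
      exact: (HN _ (Hz _ Hi)).
    by rewrite (YW_congr HL' _ _ HC) ?ltn_ord // YW_0r // mul0rz.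
  move=> HH.
  rewrite (eq_bigr (fun i : 'I_N' => YW (vacext u) (Posz l - 1 - a - Posz i)
       (YW (vacext v) (Posz i - b - 1) (extn w)) k *~ binz (a + Posz i) i)); last first.
    move=> i _; rewrite ffunMzE !ffunE; congr (_ *~ _).
    apply: (YW_congr HL' (m:=n)); last by clear HH; case: k.
    move=> j jn; rewrite (extnE' _ jn) ffunE //.
  rewrite HH; apply: eq_bigr => j _; rewrite ffunMnE ffunE Yext_vac //.
Qed.

End Wn.


Lemma cong_le (M : zmodType) m m' (y y' : nat -> M) :
  (m' <= m)%N -> cong_mod m y y' -> cong_mod m' y y'.
Proof. by move=> le H j jm; apply: H; exact: leq_trans jm le. Qed.

Section ResLin.
Variable K : fieldType.
Variable W0 : lmodType K.
Lemma res_add n (y y' : nat -> W0) : res n (sadd y y') = res n y + res n y'.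
Proof. by apply/ffunP => i; rewrite !ffunE. Qed.
Lemma res_scale n a (y : nat -> W0) : res n (fun k => a *: y k) = a *: res n y.
Proof. by apply/ffunP => i; rewrite !ffunE. Qed.
Lemma res_0 n : res n (@szero W0) = 0.
Proof. by apply/ffunP => i; rewrite !ffunE. Qed.
End ResLin.

Section Lift.
Variable K : fieldType.
Variables V0 W0 : lmodType K.
Variable vac : V0.
Variable Y : V0 -> int -> V0 -> V0.
Variable YW : (nat -> V0) -> int -> (nat -> W0) -> (nat -> W0).
Hypothesis HY : is_nlva vac Y.
Hypothesis HM : is_hmodule vac Y YW.
Hypothesis HCR : forall n, completely_reducible (@YWn K V0 W0 YW n).

Let HL := HL HM.

Definition Y0 (v : V0) p (x : W0) : W0 := YW (vacext v) p (vacext x) 0%N.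

Definition Pf n (f : W0 -> nat -> W0) : Prop :=
  [/\ forall x x', f (x + x') = sadd (f x) (f x'),
      forall a x, f (a *: x) = (fun k => a *: f x k),
      forall x, f x 0%N = x &
      forall v p x, cong_mod n (YW (vacext v) p (f x)) (f (Y0 v p x))].

Lemma Pf_base : Pf 1 (fun x => vacext x).
Proof.
split.
- move=> x x'; apply: funext => k; rewrite /sadd /vacext; case: (k == 0%N) => //.
  by rewrite addr0.
- move=> a x; apply: funext => k; rewrite /vacext; case: (k == 0%N) => //.
  by rewrite scaler0.
- by [].
- by move=> v p x [|j] //.
Qed.

Lemma YWn_res m v p y :
  res m (YW (vacext v) p (extn (res m y))) = res m (YW (vacext v) p y).
Proof. apply: res_cong; apply: YW_congr => //; exact: extn_res. Qed.

Lemma Pf_step n f : Pf n.+1 f ->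
  exists f', Pf n.+2 f' /\ forall x, cong_mod n.+1 (f' x) (f x).
Proof.
move=> [fadd fsc f0 fhom].
set m := n.+1.
pose pi (y : {ffun 'I_m.+1 -> W0}) : {ffun 'I_m -> W0} := res m (extn y).
have pi_add y y' : pi (y + y') = pi y + pi y'.
  by rewrite /pi extn_add res_add.
have pi_scale a y : pi (a *: y) = a *: pi y.
  by rewrite /pi extn_scale res_scale.
have pi_hom v p y : pi (YWn YW v p y) = YWn YW v p (pi y).
  rewrite /pi /YWn YWn_res; apply: res_cong; apply: (cong_le (m := m.+1)); [exact: leqnSn | exact: extn_res].
have pi_lift y : pi (res m.+1 (extn y)) = y.
  rewrite /pi (res_cong (y' := extn y)) ?res_ext //.
  apply: (cong_le (m := m.+1)); [exact: leqnSn | exact: extn_res].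
pose Ks := fun y : {ffun 'I_m.+1 -> W0} => pi y = 0.
have Ksub : submodule (@YWn K V0 W0 YW m.+1) Ks.
  split.
  - by rewrite /Ks /pi extn0 res_0.
  - by move=> w w'; rewrite /Ks pi_add => -> ->; rewrite addr0.
  - by move=> a w; rewrite /Ks pi_scale => ->; rewrite scaler0.
  - move=> u p w; rewrite /Ks pi_hom => ->.
    by rewrite /YWn extn0 YW_0r // res_0.
have [C [[C0 Cadd Cscale CY] [Cdec Cint]]] := HCR Ksub.
have Copp c : C c -> C (- c) by move=> /(Cscale (-1)); rewrite scaleN1r.
have uniq c c' : C c -> C c' -> pi c = pi c' -> c = c'.
  move=> Cc Cc' E; apply/eqP; rewrite -subr_eq0; apply/eqP.
  apply: Cint; last by apply: Cadd => //; exact: Copp.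
  by rewrite /Ks pi_add -scaleN1r pi_scale scaleN1r E subrr.
have ex y : exists c, C c /\ pi c = y.
  have [k [c [Kk Cc E]]] := Cdec (res m.+1 (extn y)).
  exists c; split => //; have := congr1 pi E; rewrite pi_lift pi_add Kk add0r.
  by move=> ->.
have [sg Hsg] := choice ex.
have sg_ext r j : (j < m)%N -> extn (sg r) j = extn r j.
  move=> jm; have E : res m (extn (sg r)) = res m (extn r).
    by rewrite res_ext; exact: (Hsg r).2.
  exact: res_congE E j jm.
exists (fun x => extn (sg (res m (f x)))); split; last first.
  by move=> x j jm; rewrite sg_ext // extn_res.
split.
- move=> x x'; rewrite -extn_add; congr extn.
  apply: uniq; first exact: (Hsg _).1.
    by apply: Cadd; exact: (Hsg _).1.
  by rewrite pi_add !(Hsg _).2 fadd res_add.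
- move=> a x; rewrite -extn_scale; congr extn.
  apply: uniq; first exact: (Hsg _).1.
    by apply: Cscale; exact: (Hsg _).1.
  by rewrite pi_scale !(Hsg _).2 fsc res_scale.
- by move=> x; rewrite sg_ext // extn_res.
- move=> v p x; apply: res_congE.
  rewrite res_ext.
  have -> : res m.+1 (YW (vacext v) p (extn (sg (res m (f x))))) =
            YWn YW v p (sg (res m (f x))) by [].
  apply: uniq.
  + by apply: CY; exact: (Hsg _).1.
  + exact: (Hsg _).1.
  rewrite pi_hom !(Hsg _).2 /YWn YWn_res; apply: res_cong; exact: fhom.
Qed.

Fixpoint fs n : {f | Pf n.+1 f} :=
  match n with
  | 0%N => exist _ _ Pf_base
  | n'.+1 => let t := cid (Pf_step (svalP (fs n'))) in
             exist _ (sval t) (proj1 (svalP t))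
  end.

Lemma fs_coh n x : cong_mod n.+1 (sval (fs n.+1) x) (sval (fs n) x).
Proof. by rewrite /=; exact: (proj2 (svalP (cid (Pf_step (svalP (fs n)))))). Qed.

Lemma fs_le n j x : (j <= n)%N -> cong_mod j.+1 (sval (fs n) x) (sval (fs j) x).
Proof.
elim: n => [|n IH] jn.
  by move: jn; rewrite leqn0 => /eqP ->.
case: (ltnP j n.+1) => jn'; last first.
  by have -> : j = n.+1 by apply/eqP; rewrite eqn_leq jn jn'.
move=> k kj; rewrite fs_coh; last by apply: leq_trans kj jn'.
exact: IH.
Qed.

Definition g x j := sval (fs j) x j.

Lemma g_cong n x : cong_mod n.+1 (g x) (sval (fs n) x).
Proof.
move=> j jn; rewrite /g; symmetry; apply: fs_le => //.
Qed.

Lemma g_add x x' : g (x + x') = sadd (g x) (g x').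
Proof.
apply: funext => j; rewrite /g; case: (svalP (fs j)) => H _ _ _; by rewrite H.
Qed.

Lemma g_scale a x : g (a *: x) = fun k => a *: g x k.
Proof.
apply: funext => j; rewrite /g; case: (svalP (fs j)) => _ H _ _; by rewrite H.
Qed.

Lemma g0 x : g x 0%N = x.
Proof. by rewrite /g; case: (svalP (fs 0)) => _ _ H _; rewrite H. Qed.

Lemma g_hom v p x : YW (vacext v) p (g x) = g (Y0 v p x).
Proof.
apply: funext => j.
rewrite (YW_congr HL (vacext v) p (g_cong (n:=j) x)) //.
case: (svalP (fs j)) => _ _ _ H; rewrite H //.
Qed.

End Lift.


Lemma hsum_add (M : zmodType) (A B : nat -> nat -> M) j :
  hsum (fun k l => A k l + B k l) j = hsum A j + hsum B j.
Proof. by rewrite /hsum big_split. Qed.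

Lemma hsum_assoc (M : zmodType) (F : nat -> nat -> nat -> M) m :
  hsum (fun i => hsum (F i)) m =
  hsum (fun j l => \sum_(i < j.+1) F i (j - i)%N l) m.
Proof.
elim: m F => [|m IH] F.
  by rewrite !hsum0 big_ord1.
rewrite hsumS IH [in RHS]hsumS /=.
rewrite (_ : (fun k l => \sum_(i < k.+2) F i (k.+1 - i)%N l) =
   (fun k l => \sum_(i < k.+1) F i.+1 (k - i)%N l + F 0%N k.+1 l)); last first.
  apply: funext => k; apply: funext => l.
  by rewrite big_ord_recl /= subn0 addrC.
rewrite hsum_add -addrA; congr (_ + _).
by rewrite big_ord1 subnn -hsumS.
Qed.

Section G.
Variable K : fieldType.
Variables V0 W0 : lmodType K.
Variable vac : V0.
Variable Y : V0 -> int -> V0 -> V0.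
Variable YW : (nat -> V0) -> int -> (nat -> W0) -> (nat -> W0).
Hypothesis HM : is_hmodule vac Y YW.
Hypothesis HCR : forall n, completely_reducible (@YWn K V0 W0 YW n).

Let HL := HL HM.
Let gg := g HM HCR.

Lemma gg0 : gg 0 = @szero W0.
Proof.
rewrite /gg; have := g_scale HM HCR 0 0; rewrite scale0r => ->.
by apply: funext => k; rewrite scale0r.
Qed.

Lemma gg_sum N (F : nat -> W0) l :
  gg (\sum_(i < N) F i) l = \sum_(i < N) gg (F i) l.
Proof.
elim: N => [|N IH]; first by rewrite !big_ord0 gg0.
by rewrite !big_ord_recr /= /gg g_add /sadd -IH.
Qed.

Definition G (c : nat -> W0) : nat -> W0 := hsum (fun k => gg (c k)).

Lemma G_add c c' : G (fun k => c k + c' k) = sadd (G c) (G c').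
Proof.
apply: funext => j; rewrite /sadd /G -hsum_add; apply: eq_bigr => i _.
by rewrite /gg g_add.
Qed.

Lemma G_scale a c : G (fun k => a *: c k) = fun j => a *: G c j.
Proof.
apply: funext => j; rewrite /G /hsum scaler_sumr; apply: eq_bigr => i _.
by rewrite /gg g_scale.
Qed.

Lemma G_zero : G (fun _ => 0) = @szero W0.
Proof.
apply: funext => j; rewrite /G /hsum big1 // => i _; by rewrite gg0.
Qed.

Lemma G_hmul d c : hmul d (G c) = G (hmul d c).
Proof.
apply: funext => j.
have -> : hmul d (G c) j = hsum (fun i k => d i *: G c k) j by [].
have -> : (fun i k => d i *: G c k) = (fun i => hsum (fun k => gg (d i *: c k))).
  apply: funext => i; apply: funext => k; rewrite /hsum scaler_sumr.
  by apply: eq_bigr => t _; rewrite /gg g_scale.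
rewrite hsum_assoc /G /hsum; apply: eq_bigr => i _.
rewrite /hmul; symmetry; exact: (gg_sum i.+1 (fun i0 => d i0 *: c (i - i0)%N) (j - i)).
Qed.

Lemma G_YW u p c :
  YW u p (G c) = G (fun j => \sum_(k < j.+1) Y0 YW (u (j - k)%N) p (c k)).
Proof.
rewrite /G YW_hsumr //.
have -> : (fun k => YW u p (gg (c k))) =
          (fun k => hsum (fun i => gg (Y0 YW (u i) p (c k)))).
  apply: funext => k; rewrite YW_expl //; congr hsum.
  by apply: funext => i; rewrite /gg g_hom.
apply: funext => m; rewrite hsum_assoc; apply: eq_bigr => j _.
symmetry; exact: (gg_sum j.+1 (fun k => Y0 YW (u (j - k)%N) p (c k)) (m - j)).
Qed.

Lemma G_E c j : G c j = \sum_(i < j.+1) gg (c i) (j - i)%N.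
Proof. by []. Qed.

Lemma G_inj0 m c : (forall j, (j < m)%N -> G c j = 0) -> forall k, (k < m)%N -> c k = 0.
Proof.
move=> H k km.
suff: forall i, (i <= k)%N -> c i = 0 by apply.
elim: k km => [|k IH] km i ik.
  move: ik; rewrite leqn0 => /eqP ->; have := H 0%N km.
  by rewrite G_E big_ord1 /gg g0.
case: (ltnP i k.+1) => ik'.
  by apply: IH => //; apply: ltnW.
have -> : i = k.+1 by apply/eqP; rewrite eqn_leq ik ik'.
have := H k.+1 km; rewrite G_E big_ord_recr /= subnn /gg g0 big1 ?add0r //.
move=> t _; rewrite (IH (ltnW km) t); [by have := gg0; rewrite /gg => -> | exact: (ltn_ord t)].
Qed.

Lemma G_inj m c c' : cong_mod m (G c) (G c') -> forall k, (k < m)%N -> c k = c' k.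
Proof.
move=> H k km; apply/eqP; rewrite -subr_eq0; apply/eqP.
apply: (G_inj0 (c := fun k => c k - c' k)) km => j jm.
rewrite (_ : (fun k => c k - c' k) = fun k => c k + (-1) *: c' k); last first.
  by apply: funext => t; rewrite scaleN1r.
by rewrite G_add G_scale /sadd H // scaleN1r subrr.
Qed.

Lemma G_shift n c : (forall i, (i < n)%N -> c i = 0) ->
  G c = hpow n (G (fun k => c (k + n)%N)).
Proof.
move=> H; apply: funext => j; rewrite /hpow.
case: (leqP n j) => nj; last first.
  rewrite G_E big1 // => i _; rewrite H ?gg0 //.
  exact: leq_ltn_trans (leq_ord i) nj.
have [t ->] : exists t, j = (n + t)%N by exists (j - n)%N; lia.
rewrite addKn !G_E -addnS big_split_ord /= big1 ?add0r; last first.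
  by move=> i _; rewrite H ?gg0 //= ltn_ord.
apply: eq_bigr => i _ /=; rewrite subnDl addnC //.
Qed.

Lemma G_shiftr c : hpow 1 (G c) = G (fun k => if k is k'.+1 then c k' else 0).
Proof.
rewrite [in RHS](G_shift (n := 1)); last by case.
congr (hpow 1 (G _)); apply: funext => k; by rewrite addn1.
Qed.


End G.


Lemma AC4 (M : zmodType) (x y z t : M) : x + y + z + t = t + y + (z + x).
Proof. by rewrite addrC !addrA (addrAC t x y) (addrAC (t + y) x z). Qed.

Section Main.
Variable K : fieldType.
Variables V0 W0 : lmodType K.
Variable vac : V0.
Variable Y : V0 -> int -> V0 -> V0.
Variable YW : (nat -> V0) -> int -> (nat -> W0) -> (nat -> W0).
Hypothesis HM : is_hmodule vac Y YW.
Hypothesis HCR : forall n, completely_reducible (@YWn K V0 W0 YW n).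
Variable W1 : (nat -> W0) -> Prop.
Hypothesis HW1 : hsubmodule YW W1.

Let HL := HL HM.
Let GG := G HM HCR.

Definition iota0 (x : W0) : {ffun 'I_1 -> W0} := [ffun _ => x].

Lemma iota0_Y v p x : YWn YW v p (iota0 x) = iota0 (Y0 YW v p x).
Proof.
apply/ffunP => i; rewrite !ffunE.
rewrite (ord1 i) /=.
apply: (YW_congr HL (vacext v) p (m := 1) (w := extn (iota0 x)) (w' := vacext x)) => //.
by move=> [|j] // _; rewrite /extn; case: eqP => [h|] //; rewrite ffunE.
Qed.

Lemma coef0_Y v p w : YW (vacext v) p w 0%N = Y0 YW v p (w 0%N).
Proof.
apply: (YW_congr HL (vacext v) p (m := 1)) => //.
by move=> [|j].
Qed.

Lemma W1_0 : W1 (@szero W0). Proof. by case: HW1. Qed.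
Lemma W1_add w w' : W1 w -> W1 w' -> W1 (sadd w w'). Proof. case: HW1 => _ H _ _ _; exact: H. Qed.
Lemma W1_hmul c w : W1 w -> W1 (hmul c w). Proof. case: HW1 => _ _ H _ _; exact: H. Qed.
Lemma W1_Y u p w : W1 w -> W1 (YW u p w). Proof. case: HW1 => _ _ _ H _; exact: H. Qed.
Lemma W1_cl w : hclosure W1 w -> W1 w. Proof. move=> hc; case: HW1 => _ _ _ _ [H _]; exact/H. Qed.
Lemma W1_sat w : hsat W1 w -> W1 w. Proof. move=> hc; case: HW1 => _ _ _ _ [_ H]; exact/H. Qed.

Lemma W1_hpow n w : W1 w -> W1 (hpow n w).
Proof.
move=> Hw; elim: n => [|n IH].
  suff -> : hpow 0 w = w by []. by apply: funext => k; rewrite /hpow subn0.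
suff -> : hpow n.+1 w = hmul (@d1 K) (hpow n w) by exact: W1_hmul.
apply: funext => k; rewrite hmul_d1 /hpow; case: k => [|k] //=.
Qed.

Definition W10 (y : {ffun 'I_1 -> W0}) : Prop := exists w, W1 w /\ y = iota0 (w 0%N).

Lemma W10_sub : submodule (@YWn K V0 W0 YW 1) W10.
Proof.
split.
- exists (@szero W0); split; first exact: W1_0.
  by apply/ffunP => i; rewrite !ffunE.
- move=> _ _ [w [Hw ->]] [w' [Hw' ->]]; exists (sadd w w'); split.
    exact: W1_add.
  by apply/ffunP => i; rewrite !ffunE.
- move=> a _ [w [Hw ->]]; exists (hmul (vacext a) w); split.
    exact: W1_hmul.
  by apply/ffunP => i; rewrite !ffunE hmul_vac.
- move=> u p _ [w [Hw ->]]; exists (YW (vacext u) p w); split.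
    exact: W1_Y.
  by rewrite iota0_Y coef0_Y.
Qed.

Definition C1 := sval (cid (HCR W10_sub)).
Lemma C1P : submodule (@YWn K V0 W0 YW 1) C1 /\ direct_sum_decomp W10 C1.
Proof. exact: svalP (cid (HCR W10_sub)). Qed.

Definition Cc (x : W0) : Prop := C1 (iota0 x).

Lemma Cc0 : Cc 0.
Proof.
have [[H _ _ _] _] := C1P; rewrite /Cc (_ : iota0 0 = 0) //.
Qed.

Lemma Ccadd x y : Cc x -> Cc y -> Cc (x + y).
Proof.
have [[_ H _ _] _] := C1P; rewrite /Cc (_ : iota0 (x + y) = iota0 x + iota0 y).
  exact: H.
by apply/ffunP => i; rewrite !ffunE.
Qed.

Lemma Ccscale a x : Cc x -> Cc (a *: x).
Proof.
have [[_ _ H _] _] := C1P; rewrite /Cc (_ : iota0 (a *: x) = a *: iota0 x).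
  exact: H.
by apply/ffunP => i; rewrite !ffunE.
Qed.

Lemma CcY v p x : Cc x -> Cc (Y0 YW v p x).
Proof.
have [[_ _ _ H] _] := C1P; rewrite /Cc -iota0_Y; exact: H.
Qed.

Lemma Ccsum N (F : nat -> W0) : (forall i, Cc (F i)) -> Cc (\sum_(i < N) F i).
Proof.
move=> H; elim: N => [|N IH]; first by rewrite big_ord0; exact: Cc0.
by rewrite big_ord_recr /=; apply: Ccadd.
Qed.

Lemma Ccdec x : exists w c, [/\ W1 w, Cc c & x = w 0%N + c].
Proof.
have [_ [H _]] := C1P; have [y1 [y2 [[w [Hw E1]] Hy2 E]]] := H (iota0 x).
exists w, (y2 ord0); split => //.
  by rewrite /Cc (_ : iota0 (y2 ord0) = y2) //; apply/ffunP => i; rewrite ffunE (ord1 i).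
have := congr1 (fun f : {ffun 'I_1 -> W0} => f ord0) E; rewrite !ffunE E1 !ffunE; exact: id.
Qed.

Lemma Ccint w : W1 w -> Cc (w 0%N) -> w 0%N = 0.
Proof.
move=> Hw Hc; have [_ [_ H]] := C1P.
have := H _ (ex_intro _ w (conj Hw erefl)) Hc.
by move/(congr1 (fun f : {ffun 'I_1 -> W0} => f ord0)); rewrite !ffunE.
Qed.

Definition W2 (w : nat -> W0) : Prop := exists c, (forall k, Cc (c k)) /\ w = GG c.

Lemma GG_E c j : GG c j = \sum_(i < j.+1) g HM HCR (c i) (j - i)%N.
Proof. by []. Qed.

Lemma GG_at0 c : GG c 0%N = c 0%N.
Proof. by rewrite GG_E big_ord1 g0. Qed.

Lemma hpow_inj n (w w' : nat -> W0) : hpow n w = hpow n w' -> w = w'.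
Proof.
move=> E; apply: funext => j; have := congr1 (fun f => f (j + n)%N) E.
by rewrite /hpow leq_addl addnK.
Qed.

Lemma W2_sub : hsubmodule YW W2.
Proof.
split.
- exists (fun _ => 0); split; first by move=> _; exact: Cc0.
  by rewrite /GG G_zero.
- move=> _ _ [c [Hc ->]] [c' [Hc' ->]]; exists (fun k => c k + c' k); split.
    by move=> k; apply: Ccadd.
  by rewrite /GG G_add.
- move=> d _ [c [Hc ->]]; exists (hmul d c); split.
    move=> k; rewrite /hmul; apply: (@Ccsum k.+1 (fun i => d i *: c (k - i)%N)) => i; exact: Ccscale.
  by rewrite /GG G_hmul.
- move=> u p _ [c [Hc ->]].
  exists (fun j => \sum_(k < j.+1) Y0 YW (u (j - k)%N) p (c k)); split.
    move=> j; apply: (@Ccsum j.+1 (fun k => Y0 YW (u (j - k)%N) p (c k))) => i; exact: CcY.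
  by rewrite /GG G_YW.
split => w; split.
- move=> H.
  have H' : forall m, exists c, (forall k, Cc (c k)) /\ cong_mod m w (GG c).
    by move=> m; have [w' [[c [Hc ->]] Hw]] := H m; exists c.
  have [cm Hcm] := choice H'.
  exists (fun k => cm k.+1 k); split; first by move=> k; exact: (Hcm k.+1).1.
  apply: funext => j.
  rewrite (Hcm j.+1).2 // !GG_E; apply: eq_bigr => i _.
  congr (g HM HCR _ _); symmetry.
  apply: (G_inj (HM := HM) (HCR := HCR) (m := i.+1)); last exact: ltnSn.
  move=> k ki; rewrite -/GG -(Hcm i.+1).2 // -(Hcm j.+1).2 //.
  exact: leq_trans ki (ltn_ord i).
- by move=> Hw m; exists w.
- move=> [n [n1 [c [Hc E]]]].
  have c0 : forall i, (i < n)%N -> c i = 0.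
    apply: (G_inj0 (HM := HM) (HCR := HCR)) => j jn.
    by rewrite -/GG -E /hpow leqNgt jn.
  exists (fun k => c (k + n)%N); split; first by move=> k; exact: Hc.
  apply: (hpow_inj (n := n)); rewrite E /GG; exact: G_shift.
- move=> [c [Hc ->]]; exists 1%N; split => //.
  exists (fun k => if k is k'.+1 then c k' else 0); split.
    by case=> [|k] //; exact: Cc0.
  by rewrite /GG G_shiftr.
Qed.

Lemma W12_int w : W1 w -> W2 w -> w = @szero W0.
Proof.
move=> Hw [c [Hc E]].
suff c0 : forall k i, (i < k)%N -> c i = 0.
  rewrite E (_ : c = fun _ => 0); first by rewrite /GG G_zero.
  by apply: funext => k; exact: (c0 k.+1).
elim=> [|k IH] i // ik.
case: (ltnP i k) => ik'; first exact: IH.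
have -> : i = k by apply/eqP; rewrite eqn_leq ik' -ltnS ik.
have E' := G_shift HM HCR IH.
have W1s : W1 (GG (fun j => c (j + k)%N)).
  case: k IH E' {ik ik'} => [|k] IH E'.
    suff <- : GG c = GG (fun j => c (j + 0)%N) by rewrite -E.
    by congr GG; apply: funext => j; rewrite addn0.
  apply: W1_sat; exists k.+1; split => //; rewrite -E'; by rewrite -/GG -E.
have := Ccint W1s; rewrite GG_at0 add0n; apply; exact: Hc.
Qed.

Section Decomp.
Variable w : nat -> W0.

Definition inv n (p : (nat -> W0) * (nat -> W0)) : Prop :=
  [/\ forall k, Cc (p.1 k), forall k, (n <= k)%N -> p.1 k = 0, W1 p.2 &
      cong_mod n w (sadd (GG p.1) p.2)].

Lemma inv0 : inv 0 (fun _ => 0, @szero W0).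
Proof. split; [move=> k; exact: Cc0 | by [] | exact: W1_0 | by []]. Qed.

Lemma inv_step n p : inv n p ->
  exists p', inv n.+1 p' /\ forall k, (k < n)%N -> p'.1 k = p.1 k.
Proof.
case: p => c e; rewrite /inv /= => -[Hc Hz He Hcg].
have [w' [c' [Hw' Hc' Hd]]] := Ccdec (w n - GG c n - e n).
exists (fun k => if k == n then c' else c k, sadd e (hpow n w')); split; last first.
  by move=> k kn /=; rewrite (ltn_eqF kn).
split => /=.
- by move=> k; case: (k == n).
- move=> k nk; rewrite (gtn_eqF nk); apply: Hz; exact: ltnW.
- by apply: W1_add => //; exact: W1_hpow.
- move=> j; rewrite ltnS leq_eqVlt => /orP [/eqP -> | jn].
  + rewrite /sadd /hpow leqnn subnn GG_E big_ord_recr /= eqxx subnn g0.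
    move/eqP: Hd; rewrite !subr_eq => /eqP ->.
    rewrite GG_E big_ord_recr /= subnn g0 (Hz n (leqnn n)) addr0.
    rewrite [in RHS](eq_bigr (fun i : 'I_n => g HM HCR (c i) (n - i)%N)); last first.
      by move=> i _; rewrite (ltn_eqF (ltn_ord i)).
    set R := \sum_(i < n) _.
    exact: AC4.
  + rewrite /sadd /hpow (leqNgt n j) jn /= addr0 Hcg // /sadd !GG_E.
    congr (_ + _); apply: eq_bigr => i _.
    by rewrite (ltn_eqF (leq_ltn_trans (leq_ord i) jn)).
Qed.

Fixpoint st n : {p | inv n p} :=
  match n with
  | 0%N => exist _ _ inv0
  | n'.+1 => let t := cid (inv_step (svalP (st n'))) in
             exist _ (sval t) (proj1 (svalP t))
  end.

Lemma st_coh n k : (k < n)%N -> (sval (st n.+1)).1 k = (sval (st n)).1 k.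
Proof. exact: (proj2 (svalP (cid (inv_step (svalP (st n)))))). Qed.

Lemma st_le n m k : (n <= m)%N -> (k < n)%N -> (sval (st m)).1 k = (sval (st n)).1 k.
Proof.
move=> nm kn; elim: m nm => [|m IH] nm.
  by move: nm; rewrite leqn0 => /eqP ->.
case: (ltnP n m.+1) => nm'; last first.
  by have -> : n = m.+1 by apply/eqP; rewrite eqn_leq nm nm'.
rewrite st_coh; first exact: IH.
exact: leq_trans kn nm'.
Qed.

Definition cinf k := (sval (st k.+1)).1 k.

Lemma decomp : exists w1 w2, [/\ W1 w1, W2 w2 & w = sadd w1 w2].
Proof.
exists (fun j => w j - GG cinf j), (GG cinf); split.
- apply: W1_cl => m; exists (sval (st m)).2; split.
    by case: (svalP (st m)).
  move=> j jm; case: (svalP (st m)) => _ _ _ Hcg.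
  rewrite Hcg // /sadd.
  have -> : GG cinf j = GG (sval (st m)).1 j.
    rewrite !GG_E; apply: eq_bigr => i _; congr (g HM HCR _ _).
    rewrite /cinf (st_le (n := i.+1) (m := m)) //.
    exact: leq_trans (ltn_ord i) jm.
  by rewrite addrC addKr.
- exists cinf; split => // k.
  by rewrite /cinf; case: (svalP (st k.+1)).
- by apply: funext => j; rewrite /sadd subrK.
Qed.

End Decomp.

End Main.

Unset Implicit Arguments.

Theorem lemma3p6 (R : realType) (V0 : lmodType (complex R)) (vac : V0)
  (Y : V0 -> int -> V0 -> V0) :
  is_nlva vac Y ->
  (forall (W : lmodType (complex R)) (YW : V0 -> int -> W -> W),
      is_module vac Y YW -> completely_reducible YW) ->
  forall (W0 : lmodType (complex R))
         (YW : (nat -> V0) -> int -> (nat -> W0) -> (nat -> W0)),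
    is_hmodule vac Y YW -> hcompletely_reducible YW.
Proof.
move=> HY Hall W0 YW HM W1 HW1.
have HCR : forall n, completely_reducible (@YWn _ V0 W0 YW n).
  by move=> n; apply: Hall; exact: (YWn_module HY HM n).
exists (W2 HM HCR HW1); split; first exact: W2_sub.
split; first by move=> w; exact: decomp.
by move=> w; exact: W12_int.
Qed.
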